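(* Let $G$ be a finite group, let $S$ be an irreducible $\mathbb{R}G$-module of odd dimension such that $(G,S)$ has the eigenvalue one property, and let $V$ be the direct sum of an odd number of copies of $S$. Then $(G,V)$ has the eigenvalue one property.
   Context: For a finite group $G$ and a finite-dimensional $\mathbb{R}G$-module $W$ affording $\rho\colon G\to\mathrm{GL}(W)$, the pair $(G,W)$ has the eigenvalue one property if for every $n\in N_{\mathrm{GL}(W)}(\rho(G))$ of finite order there is $g\in G$ such that $\rho(g)n$ has eigenvalue $1$. *)

(* Defs.v *)
From mathcomp Require Import all_boot all_order all_algebra all_fingroup.
From mathcomp Require Import mxrepresentation.
From mathcomp Require Import reals.
Set Implicit Arguments. Unset Strict Implicit. Unset Printing Implicit Defensive.
Import GRing.Theory Num.Theory.
Local Open Scope ring_scope.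

(* (G, W) has the eigenvalue one property, where W = R^n is the module
   affording rho : gT -> 'M[R]_n (MathComp convention: row vectors,
   matrices acting on the right). *)
Definition eigenvalue_one_property (R : realType) (gT : finGroupType)
    (G : {group gT}) (n : nat) (rho : gT -> 'M[R]_n) : Prop :=
  forall N : 'M[R]_n,
    N \in unitmx ->
    (forall g, g \in G -> exists2 h, h \in G & N *m rho g *m invmx N = rho h) ->
    (forall h, h \in G -> exists2 g, g \in G & N *m rho g *m invmx N = rho h) ->
    (exists k : nat, (0 < k)%N /\ N ^+ k = 1%:M) ->
    exists2 g, g \in G & eigenvalue (rho g *m N) 1.

(* The direct sum of m copies of the module affording rho:
   the block-diagonal matrix diag(rho g, ..., rho g) ; its dimension is
   \sum_(i < m) n = m * n. *)
Definition copies_mx (R : realType) (gT : finGroupType) (n m : nat)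
    (rho : gT -> 'M[R]_n) (g : gT) : 'M[R]_(\sum_(i < m) n) :=
  \mxdiag_(i < m) rho g.

(* Main.v *)
Require Import Defs.
From mathcomp Require Import all_boot all_order all_algebra all_fingroup.
From mathcomp Require Import mxrepresentation.
From mathcomp Require Import reals polyrcf.
Set Implicit Arguments. Unset Strict Implicit. Unset Printing Implicit Defensive.
Import GRing.Theory Num.Theory.
Local Open Scope ring_scope.

Lemma odd_eig (R : realType) k (A : 'M[R]_k) : odd k -> exists a, eigenvalue A a.
Proof.
move=> ok; have [|a ra] := @odd_poly_root R (char_poly A).
  by rewrite size_char_poly /= ok.
by exists a; rewrite eigenvalue_root_char.
Qed.

Section Schur.
Variables (R : realType) (gT : finGroupType) (G : {group gT}) (n : nat).
Variable rS : mx_representation R G n.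
Hypothesis irr : mx_irreducible rS.

Lemma schur_unit (X : 'M[R]_n) : X != 0 ->
  (forall h, h \in G -> exists2 g, g \in G & rS h *m X = X *m rS g) ->
  X \in unitmx.
Proof.
move=> nzX hX; have [_ Hirr] := (mx_irrP rS).1 irr.
rewrite -row_free_unit -kermx_eq0; apply/negPn/negP => nzK.
have modK : mxmodule rS (kermx X).
  apply/mxmoduleP => h Gh; have [g Gg e] := hX h Gh.
  by rewrite sub_kermx -mulmxA e mulmxA mulmx_ker mul0mx.
have := Hirr _ modK nzK; rewrite row_full_unit => uK.
move/eqP: nzX; apply; rewrite -(mulKmx uK X) mulmx_ker mulmx0 //.
Qed.

Lemma schur_scalar (Y : 'M[R]_n) : odd n ->
  (forall h, h \in G -> rS h *m Y = Y *m rS h) -> exists a, Y = a%:M.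
Proof.
move=> on hY; have [a /eigenvalueP [v ev nzv]] := odd_eig Y on.
exists a; apply/eqP; rewrite -subr_eq0; apply/negPn/negP => nz.
have u : Y - a%:M \in unitmx.
  apply: schur_unit nz _ => h Gh; exists h; first exact: Gh.
  by rewrite mulmxBr mulmxBl hY // (scalar_mxC a (rS h)).
suff : v = 0 by move/eqP: nzv.
by rewrite -(mulmxK u v) mulmxBr ev mul_mx_scalar subrr mul0mx.
Qed.
End Schur.

Section Kron.
Variables (R : realType) (m n : nat).
Definition K (A : 'M[R]_m) (M : 'M[R]_n) : 'M[R]_(\sum_(i < m) n) :=
  \mxblock_(i, j) (A i j *: M).

Lemma K_mul A1 M1 A2 M2 : K A1 M1 *m K A2 M2 = K (A1 *m A2) (M1 *m M2).
Proof.
rewrite /K mul_mxblock; apply/eq_mxblock => i j.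
rewrite mxE scaler_suml; apply: eq_bigr => l _.
by rewrite -scalemxAl -scalemxAr scalerA.
Qed.

Lemma K1 : K 1%:M 1%:M = 1%:M.
Proof.
rewrite -(mxdiagZ (p_ := fun _ : 'I_m => n) 1) /K /mxdiag; apply/eq_mxblock => i j.
rewrite mxE; case: eqP => _; rewrite ?conform_mx_id ?scale1r ?scale0r //.
Qed.

Lemma K_exp A M k : K A M ^+ k = K (A ^+ k) (M ^+ k).
Proof.
elim: k => [|k IH]; first by rewrite !expr0 K1.
by rewrite !exprS IH -!mulmxE K_mul.
Qed.
End Kron.

Lemma scalar_inj (R : realType) n (a b : R) : (0 < n)%N -> a%:M = b%:M :> 'M[R]_n -> a = b.
Proof.
move=> n0 /matrixP/(_ (Ordinal n0) (Ordinal n0)); rewrite !mxE eqxx !mulr1n //.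
Qed.

Lemma exprZ_mx (R : realType) n (a : R) (X : 'M[R]_n) t :
  (a *: X) ^+ t = a ^+ t *: X ^+ t.
Proof.
elim: t => [|t IH]; first by rewrite !expr0 scale1r.
by rewrite !exprS IH -!mulmxE -scalemxAl -scalemxAr scalerA.
Qed.

Unset Implicit Arguments. Set Strict Implicit.

Theorem lemma3p1p2 (R : realType) (gT : finGroupType) (G : {group gT})
    (n : nat) (rS : mx_representation R G n) (m : nat) :
  odd n -> mx_irreducible rS ->
  eigenvalue_one_property G rS ->
  odd m ->
  eigenvalue_one_property G (copies_mx m rS).
Proof.
move=> on irr ev om N uN Hl Hr [k [k0 Nk]].
have n0 : (0 < n)%N by apply: contraTT on; rewrite -eqn0Ngt => /eqP->.
have m0 : (0 < m)%N by apply: contraTT om; rewrite -eqn0Ngt => /eqP->.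
pose B i j := @submxblock R m m (fun _ => n) (fun _ => n) N i j.
have blk : forall g h, N *m copies_mx m rS g = copies_mx m rS h *m N ->
    forall i j, B i j *m rS g = rS h *m B i j.
  move=> g h e i j; rewrite /copies_mx -[N]submxblockK in e.
  rewrite mul_mxblock_mxdiag mul_mxdiag_mxblock in e.
  by have := congr1 (fun A => submxblock A i j) e; rewrite !mxblockK.
have Bl : forall g, g \in G -> exists2 h, h \in G &
    forall i j, B i j *m rS g = rS h *m B i j.
  move=> g Gg; have [h Gh e] := Hl g Gg; exists h => //; apply: blk.
  by rewrite -e mulmxKV.
have Br : forall h, h \in G -> exists2 g, g \in G &
    forall i j, rS h *m B i j = B i j *m rS g.
  move=> h Gh; have [g Gg e] := Hr h Gh; exists g => // i j.
  by symmetry; apply: blk; rewrite -e mulmxKV.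
have [[i0 j0] /= nzX | none] := pickP [pred ij : 'I_m * 'I_m | B ij.1 ij.2 != 0];
    last first.
  exfalso; have N0 : N = 0.
    apply/mxblockP => i j; rewrite submxblock0.
    by have := none (i, j); rewrite /= => /negbFE/eqP.
  have p0 : (0 < \sum_(i < m) n)%N.
    by rewrite big_const_ord iter_addn addn0 muln_gt0 m0 n0.
  move: uN; rewrite N0 => u0; have := mulmxV u0; rewrite mul0mx.
  move/matrixP/(_ (Ordinal p0) (Ordinal p0)); rewrite !mxE eqxx /=.
  by move/eqP; rewrite eq_sym oner_eq0.
pose X0 := B i0 j0.
have uX : X0 \in unitmx.
  apply: (schur_unit irr nzX) => h Gh; have [g Gg e] := Br h Gh.
  by exists g => //; apply: e.
have coef : forall ij : 'I_m * 'I_m, exists a : R, B ij.1 ij.2 = a *: X0.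
  case=> i j /=; have [a ea] : exists a, B i j *m invmx X0 = a%:M.
    apply: (schur_scalar irr) => // h Gh; have [g Gg e] := Br h Gh.
    have e0 : invmx X0 *m rS h = rS g *m invmx X0.
      by rewrite -[LHS](mulmxK uX) -(mulmxA (invmx X0)) (e i0 j0) mulKmx.
    by rewrite mulmxA e -!mulmxA e0.
  by exists a; rewrite -mul_scalar_mx -ea mulmxKV.
have [f hf] := fin_all_exists coef.
pose C := \matrix_(i < m, j < m) f (i, j).
have NK : N = K C X0.
  by apply/mxblockP => i j; rewrite /K mxblockK mxE; exact: hf (i, j).
move: Nk; rewrite NK K_exp -(K1 R m n) => Nk.
have bk : forall i j, (C ^+ k) i j *: X0 ^+ k = (1%:M : 'M[R]_m) i j *: 1%:M.
  by move=> i j; have := congr1 (fun A => submxblock A i j) Nk; rewrite /K !mxblockK.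
pose c := (C ^+ k) i0 i0.
have bc := bk i0 i0; rewrite mxE eqxx -/c scale1r in bc.
have c0 : c != 0.
  apply/eqP => ec; move: bc; rewrite ec scale0r.
  move/matrixP/(_ (Ordinal n0) (Ordinal n0)); rewrite !mxE eqxx /=.
  by move/eqP; rewrite eq_sym oner_eq0.
have Xk : X0 ^+ k = c^-1%:M.
  rewrite -[LHS]scale1r -(mulVf c0) -scalerA bc.
  by apply/matrixP => i j; rewrite !mxE mulr_natr.
have Ck : C ^+ k = c%:M.
  apply/matrixP => i j; have := bk i j; rewrite Xk !mxE.
  have -> : forall a : R, a *: 1%:M = a%:M :> 'M[R]_n.
    by move=> a; apply/matrixP => i' j'; rewrite !mxE mulr_natr.
  by rewrite scale_scalar_mx; move/(scalar_inj n0) => e; rewrite -[LHS](mulfVK c0) e mulrC mulr_natr.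
have [l /eigenvalueP [w wl nzw]] := odd_eig C om.
have wpow : forall t, w *m C ^+ t = l ^+ t *: w.
  elim=> [|t IH]; first by rewrite !expr0 mulmx1 scale1r.
  by rewrite exprSr -mulmxE mulmxA IH -scalemxAl wl scalerA -exprSr.
have lkc : l ^+ k = c.
  have := wpow k; rewrite Ck mul_mx_scalar => /eqP; rewrite -subr_eq0 -scalerBl.
  by rewrite scaler_eq0 (negbTE nzw) orbF subr_eq0 => /eqP.
have l0 : l != 0.
  by apply: contraNneq c0 => l0; rewrite -lkc l0 expr0n eqn0Ngt k0.
pose M' := l *: X0; pose C' := l^-1 *: C.
have NK' : N = K C' M'.
  rewrite NK /K; apply/eq_mxblock => i j; rewrite /C' /M' !mxE scalerA.
  by rewrite mulrAC mulVf // mul1r.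
have M'k : M' ^+ k = 1%:M.
  by rewrite /M' exprZ_mx Xk lkc scale_scalar_mx mulfV.
have uM' : M' \in unitmx by rewrite /M' unitmxZ // unitfE.
have conjM : forall g, M' *m rS g *m invmx M' = X0 *m rS g *m invmx X0.
  move=> g; rewrite /M' invmxZ // -!scalemxAl -scalemxAr scalerA mulfV //.
  by rewrite scale1r.
have [g Gg /eigenvalueP [u eu nzu]] : exists2 g, g \in G & eigenvalue (rS g *m M') 1.
  apply: ev => //.
  - move=> g Gg; have [h Gh e] := Bl g Gg; exists h => //.
    by rewrite conjM (e i0 j0) mulmxK.
  - move=> h Gh; have [g Gg e] := Br h Gh; exists g => //.
    by rewrite conjM -(e i0 j0) mulmxK.
  - by exists k.
exists g => //; apply/eigenvalueP; exists (\mxrow_j (w 0 j *: u)).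
  have wC' : w *m C' = w by rewrite /C' -scalemxAr wl scalerA mulVf // scale1r.
  rewrite scale1r -NK NK' /copies_mx mulmxA mul_mxrow_mxdiag /K mul_mxrow_mxblock.
  apply/eq_mxrow => j.
  transitivity (\sum_i (w 0 i * C' i j) *: u).
    apply: eq_bigr => i _.
    by rewrite -!scalemxAl -scalemxAr -mulmxA eu scale1r scalerA.
  by rewrite -scaler_suml -[in RHS]wC' mxE.
apply/negP => /eqP v0; apply: (negP nzw); apply/eqP/rowP => j; rewrite mxE.
have := congr1 (fun A => submxrow A j) v0; rewrite mxrowK submxrow0 => /eqP.
by rewrite scaler_eq0 (negbTE nzu) orbF => /eqP.
Qed.
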